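(* Let $\mathcal{C}$ be a $q$-ary cyclic code of length $n$ and let $\mathcal{L}$ be a cyclic code of length $n_\ell$ and minimum distance $d_\ell$ over $\mathbb{F}_{q_\ell}=\mathbb{F}_{q^u}$, with $\gcd(n,n_\ell)=1$, which is a non-zero-locator code of $\mathcal{C}$ with integers $\mu$ and $e$ (with respect to $\alpha$ of order $n$ in $\mathbb{F}_{q^s}$ and $\beta$ of order $n_\ell$ in $\mathbb{F}_{q^{us_\ell}}$; let $r=\mathrm{lcm}(s,us_\ell)$). Let $a(x)=\sum_{j\in\mathcal{Z}}a_jx^j\in\mathcal{L}$ be a codeword with support $\mathcal{Z}$, $|\mathcal{Z}|=d_\ell$, and define $f(x)=\prod_{j\in\mathcal{Z}}(1-x\beta^j)$ and $h(x)=\sum_{j\in\mathcal{Z}}a_j\prod_{\ell\in\mathcal{Z},\ell\ne j}(1-x\beta^\ell)$. Fix $\kappa\in\mathcal{Z}$ and put $\gamma_i=\beta^{-\kappa}\alpha^{-i}$ for $i=0,\dots,n-1$. Let $\mathcal{E}\subseteq\{0,\dots,n-1\}$ be a set of error positions and $e_i\in\mathbb{F}_q$, $i\in\mathcal{E}$, the error values, and define $$\Lambda(x)=\prod_{i\in\mathcal{E}}f(x\alpha^i),\qquad \Omega(x)=\sum_{i\in\mathcal{E}}\Big(e_i\alpha^{ie}h(x\alpha^i)\prod_{\ell\in\mathcal{E},\ell\ne i}f(x\alpha^\ell)\Big)$$ in $\mathbb{F}_{q^r}[x]$. Then for every $i\in\mathcal{E}$, $$e_i=\frac{\Omega(\gamma_i)}{\alpha^{ie}\,h(\gamma_i\alpha^i)\prod_{\ell\in\mathcal{E},\ell\ne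 i}f(\gamma_i\alpha^\ell)}=\frac{\Omega(\gamma_i)\,\alpha^{i}\,f'(\gamma_i\alpha^i)}{\Lambda'(\gamma_i)\,\alpha^{ie}\,h(\gamma_i\alpha^i)},$$ where $f'$ and $\Lambda'$ denote formal derivatives.
   Context: A $q$-ary cyclic code of length $n$ ($\gcd(n,q)=1$) is an ideal of $\mathbb{F}_q[x]/(x^n-1)$, codewords identified with polynomials of degree $<n$. Non-zero-locator code: with $\mathcal{C}$, $\mathcal{L}$, $\alpha$, $\beta$ as in the claim, $\mathcal{L}$ is a non-zero-locator code of $\mathcal{C}$ if there exist an integer $\mu\ge 2$ and an integer $e$ such that for all $a(x)\in\mathcal{L}$ and all $c(x)\in\mathcal{C}$, $\sum_{j\ge0}c(\alpha^{j+e})a(\beta^j)x^j\equiv 0\pmod{x^{\mu-1}}$ as formal power series. *)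

(* Defs.v *)
From HB Require Import structures.
From mathcomp Require Import all_boot all_order all_algebra all_field.
Set Implicit Arguments. Unset Strict Implicit. Unset Printing Implicit Defensive.
Import Order.TTheory GRing.Theory.
Local Open Scope ring_scope.

(* A cyclic code of length n over the subfield of R described by [S]:
   a set of polynomials (codewords, degree < n) with coefficients in S,
   forming an S-subspace closed under multiplication by x modulo x^n - 1,
   i.e. an ideal of S[x]/(x^n - 1). *)
Definition cyclic_code (R : fieldType) (S : {pred R}) (n : nat)
  (C : pred {poly R}) : Prop :=
  [/\ forall c, C c -> (size c <= n)%N /\ (forall i, c`_i \in S),
      C 0,
      forall c d, C c -> C d -> C (c + d),
      forall k c, k \in S -> C c -> C (k *: c)
    & forall c, C c -> C (('X * c) %% ('X^n - 1))].

Definition weight (R : ringType) (c : {poly R}) : nat :=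
  count (fun x => x != 0) (polyseq c).

Definition min_distance (R : ringType) (C : pred {poly R}) (d : nat) : Prop :=
  (exists2 c, C c & c != 0 /\ weight c = d) /\
  (forall c, C c -> c != 0 -> (d <= weight c)%N).

(* L is a non-zero-locator code of C with integers mu and e
   (w.r.t. alpha and beta): for all a in L and c in C,
   sum_j c(alpha^(j+e)) a(beta^j) x^j = 0 mod x^(mu-1). *)
Definition nz_locator (F : fieldType) (K : fieldExtType F)
  (C : pred {poly F}) (L : pred {poly K}) (alpha beta : K)
  (mu : nat) (e : int) : Prop :=
  (2 <= mu)%N /\
  forall a c, L a -> C c -> forall j : nat, (j < mu.-1)%N ->
    (map_poly (in_alg K) c).[alpha ^ (j%:Z + e)] * a.[beta ^+ j] = 0.

Definition locf (K : fieldType) (nl : nat) (beta : K) (Z : {set 'I_nl})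
  : {poly K} := \prod_(j in Z) (1 - 'X * (beta ^+ j)%:P).

Definition loch (K : fieldType) (nl : nat) (beta : K) (a : {poly K})
  (Z : {set 'I_nl}) : {poly K} :=
  \sum_(j in Z) a`_j *: \prod_(l in Z | l != j) (1 - 'X * (beta ^+ l)%:P).

Definition scalex (K : fieldType) (p : {poly K}) (c : K) : {poly K} :=
  p \Po ('X * c%:P).

(* Main.v *)
Require Import Defs.
From HB Require Import structures.
From mathcomp Require Import all_boot all_order all_algebra all_field.
Import Order.TTheory GRing.Theory.
Local Open Scope ring_scope.
From mathcomp Require Import ring.
Lemma unit_coprime {K : fieldType} {n nl : nat} {x : K} :
  (0 < n)%N -> coprime n nl -> x ^+ n = 1 -> x ^+ nl = 1 -> x = 1.
Proof.
move=> n0 co xn xnl.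
have [m pm dm] := prim_order_exists n0 xn.
have dml : (m %| nl)%N by rewrite (prim_order_dvd pm) xnl.
have : (m %| gcdn n nl)%N by rewrite dvdn_gcd dm dml.
rewrite (eqP co) dvdn1 => /eqP m1.
by move: (prim_expr_order pm); rewrite m1 expr1.
Qed.

Lemma key (K : fieldType) n nl (alpha beta : K) (j k : 'I_nl) (l i : 'I_n) :
  coprime n nl -> n.-primitive_root alpha -> nl.-primitive_root beta ->
  beta ^+ j / beta ^+ k * (alpha ^+ l / alpha ^+ i) = 1 -> j = k /\ l = i.
Proof.
move=> co pa pb.
have n0 : (0 < n)%N := leq_ltn_trans (leq0n _) (ltn_ord i).
have a0 : alpha != 0.
  apply/eqP => a0; move: (prim_expr_order pa); rewrite a0 expr0n.
  by rewrite eqn0Ngt n0 => /esym/eqP; rewrite oner_eq0.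
have b0 : beta != 0.
  apply/eqP => b0; move: (prim_expr_order pb); rewrite b0 expr0n.
  by rewrite eqn0Ngt (leq_ltn_trans (leq0n _) (ltn_ord k)) => /esym/eqP; rewrite oner_eq0.
set x := _ / _; set y := _ / _ => xy.
have xn0 : x != 0 by apply/eqP=> x0; move: xy; rewrite x0 mul0r => /eqP; rewrite eq_sym oner_eq0.
have yV : y = x^-1 by apply: (mulfI xn0); rewrite xy mulfV.
have xnl : x ^+ nl = 1.
  by rewrite /x exprMn exprVn -!exprM mulnC exprM (prim_expr_order pb) mulnC exprM (prim_expr_order pb) !expr1n invr1 mulr1.
have yn : y ^+ n = 1.
  by rewrite /y exprMn exprVn -!exprM mulnC exprM (prim_expr_order pa) mulnC exprM (prim_expr_order pa) !expr1n invr1 mulr1.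
have xn : x ^+ n = 1 by move: yn; rewrite yV exprVn => /(congr1 GRing.inv); rewrite invrK invr1.
have x1 : x = 1 := unit_coprime n0 co xn xnl.
have y1 : y = 1 by rewrite yV x1 invr1.
split; apply/val_inj => /=.
  move: x1; rewrite /x => /(canRL (divfK _)) => /(_ (expf_neq0 _ b0)); rewrite mul1r => /eqP.
  by rewrite (eq_prim_root_expr pb) !modn_small // => /eqP.
move: y1; rewrite /y => /(canRL (divfK _)) => /(_ (expf_neq0 _ a0)); rewrite mul1r => /eqP.
by rewrite (eq_prim_root_expr pa) !modn_small // => /eqP.
Qed.

Theorem proposition4
  (F : finFieldType) (K : fieldExtType F)
  (u s sl : nat) (El S T : {subfield K})
  (n nl dl : nat) (C : pred {poly F}) (L : pred {poly K})
  (alpha beta : K) (mu : nat) (e : int)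
  (a : {poly K}) (Z : {set 'I_nl}) (kappa : 'I_nl)
  (Err : {set 'I_n}) (ev : 'I_n -> F) :
  (* F = F_q; El = F_{q^u}; S = F_{q^s}; T = F_{q^{u s_l}}; K = F_{q^r} *)
  \dim El = u -> \dim S = s -> \dim T = (u * sl)%N ->
  \dim (fullv : {vspace K}) = lcmn s (u * sl) ->
  coprime n #|F| -> cyclic_code predT n C ->
  coprime nl (#|F| ^ u) -> cyclic_code [pred x | x \in El] nl L ->
  min_distance L dl ->
  coprime n nl ->
  alpha \in S -> n.-primitive_root alpha ->
  beta \in T -> nl.-primitive_root beta ->
  nz_locator C L alpha beta mu e ->
  L a -> Z = [set j : 'I_nl | a`_j != 0] -> #|Z| = dl ->
  kappa \in Z ->
  let f := locf beta Z in
  let h := loch beta a Z in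
  let gamma := fun i : 'I_n => (beta ^+ kappa)^-1 * (alpha ^+ i)^-1 in
  let Lambda := \prod_(i in Err) scalex f (alpha ^+ i) in
  let Omega := \sum_(i in Err)
      ((in_alg K (ev i) * alpha ^ (i%:Z * e)) *: (scalex h (alpha ^+ i)
        * \prod_(l in Err | l != i) scalex f (alpha ^+ l))) in
  forall i, i \in Err ->
    in_alg K (ev i) =
      Omega.[gamma i] /
      (alpha ^ (i%:Z * e) * h.[gamma i * alpha ^+ i]
        * \prod_(l in Err | l != i) f.[gamma i * alpha ^+ l])
    /\
    in_alg K (ev i) =
      Omega.[gamma i] * alpha ^+ i * (f^`()).[gamma i * alpha ^+ i] /
      ((Lambda^`()).[gamma i] * alpha ^ (i%:Z * e) * h.[gamma i * alpha ^+ i]).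
Proof.
move=> _ _ _ _ _ _ _ _ _ co _ pa _ pb _ _ HZ _ kZ f h gamma Lambda Omega i iE.
have n0 : (0 < n)%N := leq_ltn_trans (leq0n _) (ltn_ord i).
have a0 : alpha != 0.
  apply/eqP => a0; move: (prim_expr_order pa); rewrite a0 expr0n.
  by rewrite eqn0Ngt n0 => /esym/eqP; rewrite oner_eq0.
have b0 : beta != 0.
  apply/eqP => b0; move: (prim_expr_order pb); rewrite b0 expr0n.
  by rewrite eqn0Ngt (leq_ltn_trans (leq0n _) (ltn_ord kappa)) => /esym/eqP; rewrite oner_eq0.
have ai0 : alpha ^+ i != 0 by rewrite expf_neq0.
have bk0 : beta ^+ kappa != 0 by rewrite expf_neq0.
have gi : gamma i * alpha ^+ i = (beta ^+ kappa)^-1 by rewrite /gamma mulfVK.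
have G : forall (j : 'I_nl) (l : 'I_n), (j != kappa) || (l != i) ->
    1 - gamma i * alpha ^+ l * beta ^+ j != 0.
  move=> j l /orP H; apply/eqP => /subr0_eq /esym E.
  have [E1 E2] : j = kappa /\ l = i.
    apply: (key _ _ _ _ _ _ _ _ _ co pa pb); rewrite -E /gamma.
    by rewrite /gamma; field; rewrite ai0 bk0.
  by move: H; rewrite E1 E2 !eqxx; case.
have G0 : 1 - (beta ^+ kappa)^-1 * beta ^+ kappa = 0 by rewrite mulVf // subrr.
have hornP : forall (c y : K), (1 - 'X * c%:P).[y] = 1 - y * c.
  by move=> c y; rewrite !hornerE.
have hornS : forall (p : {poly K}) (c y : K), (scalex p c).[y] = p.[y * c].
  by move=> p c y; rewrite /scalex horner_comp !hornerE.
have f0 : f.[(beta ^+ kappa)^-1] = 0.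
  rewrite /f /locf horner_prod (bigD1 kappa) //= hornP G0 mul0r //.
have fP : \prod_(l in Err | l != i) f.[gamma i * alpha ^+ l] != 0.
  apply/prodf_neq0 => l /andP [_ li]; rewrite /f /locf horner_prod.
  apply/prodf_neq0 => j _; rewrite hornP; apply: G; by rewrite li orbT.
have restP : \prod_(j in Z | j != kappa) (1 - (beta ^+ kappa)^-1 * beta ^+ j) != 0.
  apply/prodf_neq0 => j /andP [_ jk]; rewrite -gi; apply: G; by rewrite jk.
have hP : h.[(beta ^+ kappa)^-1] != 0.
  rewrite /h /loch horner_sum (bigD1 kappa) //= [X in _ + X]big1 ?addr0; last first.
    move=> j /andP [jZ jk]; rewrite hornerZ horner_prod (bigD1 kappa) /=; last by rewrite kZ eq_sym.
    by rewrite hornP G0 mul0r mulr0.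
  rewrite hornerZ horner_prod mulf_neq0 //.
    by move: kZ; rewrite HZ inE.
  by under eq_bigr do rewrite hornP.
have dfP : (f^`()).[(beta ^+ kappa)^-1] != 0.
  rewrite /f /locf (bigD1 kappa) //= derivM hornerD hornerM [X in _ + X]hornerM hornP G0 mul0r addr0.
  rewrite horner_prod mulf_neq0 //.
    by rewrite !derivE !hornerE oppr_eq0.
  by under eq_bigr do rewrite hornP.
have Om : Omega.[gamma i] = (in_alg K (ev i) * alpha ^ (i%:Z * e)) *
     (h.[gamma i * alpha ^+ i] * \prod_(l in Err | l != i) f.[gamma i * alpha ^+ l]).
  rewrite /Omega horner_sum (bigD1 i) //= [X in _ + X]big1 ?addr0; last first.
    move=> j /andP [jE ji]; rewrite hornerZ hornerM horner_prod (bigD1 i) /=; last by rewrite iE eq_sym.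
    by rewrite [(scalex f _).[_]]hornS gi f0 mul0r !mulr0.
  by rewrite hornerZ hornerM hornS horner_prod; under eq_bigr do rewrite hornS.
have La : (Lambda^`()).[gamma i] = alpha ^+ i * (f^`()).[gamma i * alpha ^+ i] *
     \prod_(l in Err | l != i) f.[gamma i * alpha ^+ l].
  rewrite /Lambda (bigD1 i) //= derivM hornerD hornerM [X in _ + X]hornerM hornS gi f0 mul0r addr0.
  rewrite /scalex deriv_comp hornerM horner_comp !derivE !hornerE horner_prod gi.
  under eq_bigr do rewrite hornS.
  by rewrite [_ * alpha ^+ i]mulrC.
have A0 : alpha ^ (i%:Z * e) != 0 by rewrite expfz_neq0.
by rewrite Om La gi; split; field; rewrite ?fP ?hP ?A0 ?dfP ?ai0.
Qed.
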